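(* Let $X=\prod_{i\in I}X_i$ be a topological product and suppose that $Y$ is a subspace of $X$ that fills all countable subproducts in $X$ and satisfies one of the following conditions: (a) the space $X_J=\prod_{i\in J}X_i$ is pseudo-$\aleph_1$-compact for any countable set $J\subset I$; (b) $X_i$ is first-countable for each $i\in I$; (c) $X_i$ is separable for each $i\in I$. Then $Y$ is $C$-embedded in $X$.
   Context: For nonempty $J\subseteq I$, $\pi_J\colon X\to X_J$ is the projection. A set $Y\subseteq X$ fills countable subproducts of $X$ if $\pi_J(Y)=X_J$ for every countable nonempty $J\subseteq I$. A space is pseudo-$\aleph_1$-compact if every locally finite family of open sets in it is countable. $Y$ is $C$-embedded in $X$ if every continuous real-valued function on $Y$ extends to a continuous real-valued function on $X$. *)

(* Defs.v *)
From HB Require Import structures.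
From mathcomp Require Import all_boot all_order all_algebra.
From mathcomp Require Import all_classical all_reals all_analysis.

Unset Printing Implicit Defensive.

Import numFieldNormedType.Exports.
Local Open Scope classical_set_scope.

Definition Prod {I : Type} (X : I -> topologicalType) : topologicalType :=
  prod_topology X.

Definition subProd {I : Type} (X : I -> topologicalType) (J : set I)
  : topologicalType := prod_topology (fun j : set_type J => X (set_val j)).

Definition projJ {I : Type} (X : I -> topologicalType) (J : set I)
  (x : Prod X) : subProd X J := fun j : set_type J => x (set_val j).

Definition fills_countable_subproducts {I : Type} (X : I -> topologicalType)
  (Y : set (Prod X)) : Prop :=
  forall J : set I, J !=set0 -> countable J -> projJ X J @` Y = [set: subProd X J].

Definition locally_finite_family {T : topologicalType} (F : set (set T)) : Prop :=
  forall x : T, exists U : set T,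
    nbhs x U /\ finite_set [set A | F A /\ A `&` U !=set0].

Definition pseudo_aleph1_compact (T : topologicalType) : Prop :=
  forall F : set (set T), (forall A, F A -> open A) ->
    locally_finite_family F -> countable F.

Definition first_countable (T : topologicalType) : Prop :=
  forall x : T, exists B : set (set T),
    [/\ countable B, (forall b, B b -> nbhs x b) &
        (forall U, nbhs x U -> exists2 b, B b & b `<=` U)].

Definition separable (T : topologicalType) : Prop :=
  exists2 D : set T, countable D & dense D.

(* Y is C-embedded in X: every continuous real-valued function on the
   subspace Y (the type [set_type Y] with the subspace (initial)
   topology) extends to a continuous real-valued function on X. *)
Definition C_embedded (R : realType) {T : topologicalType} (Y : set T) : Prop :=
  forall f : set_type Y -> R, continuous f ->
    exists g : T -> R, continuous g /\ forall y : set_type Y, g (set_val y) = f y.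

(* Main.v *)
Require Import Defs.
From HB Require Import structures.
From mathcomp Require Import all_boot all_order all_algebra.
From mathcomp Require Import all_classical all_reals all_analysis.
From mathcomp Require Import finmap.
Import numFieldNormedType.Exports.
Local Open Scope classical_set_scope.

Section Box.
Context {I : Type} {T : I -> topologicalType}.

Definition box (S : set I) (O : forall i, set (T i)) : set (prod_topology T) :=
  [set q | forall i, S i -> O i (q i)].

Definition isbox (p : prod_topology T) (A : set (prod_topology T)) :=
  exists S O, [/\ finite_set S, (forall i, S i -> open (O i) /\ O i (p i)) & box S O `<=` A].

Lemma isbox_filter p : Filter (isbox p).
Proof.
constructor.
- exists set0, (fun i => setT); split => //; exact: finite_set0.
- move=> A B [Sa [Oa [fa oa sa]]] [Sb [Ob [fb ob sb]]].
  exists (Sa `|` Sb), (fun i => (if pselect (Sa i) then Oa i else setT) `&` (if pselect (Sb i) then Ob i else setT)).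
  split.
  + by rewrite finite_setU; split.
  + move=> i _; split.
    * apply: openI; case: pselect => h; (try exact: openT); exact: (oa _ h).1 || exact: (ob _ h).1.
    * split; case: pselect => h //; [exact: (oa _ h).2 | exact: (ob _ h).2].
  + move=> q Hq; split.
    * apply: sa => i h; have := Hq i (or_introl h); case: pselect => // _ [] //.
    * apply: sb => i h; have := Hq i (or_intror h); case: (pselect (Sb i)) => // _ [] //.
- move=> A B AB [SS [OO [fS oS sS]]]; exists SS, OO; split => //; exact: subset_trans AB.
Qed.

Lemma nbhs_isbox p A : nbhs p A -> isbox p A.
Proof.
have F := isbox_filter p.
have : (isbox p : set_system (prod_topology T)) --> p.
  apply/cvg_sup => i.
  move=> B /= [C [[D oD <-] Cp CB]].
  exists [set i], (fun j => if pselect (j = i) is left e then (eq_rect_r (fun k => set (T k)) D e) else setT).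
  split; first exact: finite_set1.
  + move=> j -> /=; case: pselect => // e; rewrite (Prop_irrelevance e erefl) /=; split => //.
  + move=> q /(_ i erefl); case: pselect => // e; rewrite (Prop_irrelevance e erefl) /= => Dq.
    exact: CB.
move=> H nA; apply: H; exact: nA.
Qed.
End Box.

Lemma finite_bigI {U : Type} {J : Type} (F : set_system U) (S : set J) (P : J -> set U) :
  Filter F -> finite_set S -> (forall i, S i -> F (P i)) ->
  F [set t | forall i, S i -> P i t].
Proof.
move=> FF fS HP.
pose J' : choiceType := {classic J}.
have E := @fset_setK J' S fS.
have HP' : forall i : J', i \in fset_set (S : set J') -> F (P i).
  by move=> i; rewrite (@in_fset_set J') // => /set_mem; exact: HP.
have := @filter_bigI U J' (fset_set (S : set J')) P F FF HP'.
rewrite E; apply: filterS => t Ht i Si; exact: Ht.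
Qed.

Section Box2.
Context {I : Type} {T : I -> topologicalType}.

Lemma nbhs_proj_pre (p : prod_topology T) i (B : set (T i)) :
  open B -> B (p i) -> nbhs p [set q : prod_topology T | B (q i)].
Proof.
move=> oB Bp.
have /cvg_sup/(_ i) h : (nbhs p) --> p by exact: cvg_id.
apply: h. exists [set q : prod_topology T | B (q i)]; split => //. by exists B.
Qed.

Lemma isbox_nbhs (p : prod_topology T) (A : set (prod_topology T)) : isbox p A -> nbhs p A.
Proof.
move=> [Sx [Ox [fS oS sS]]]; apply: (@filterS _ (nbhs p) _ (box Sx Ox)) => //.
apply: (@finite_bigI _ _ _ Sx (fun i (q : prod_topology T) => Ox i (q i))) => // i Si.
by apply: nbhs_proj_pre; case: (oS i Si).
Qed.

Lemma nbhs_boxE (p : prod_topology T) (A : set (prod_topology T)) : nbhs p A <-> isbox p A.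
Proof. split; [exact: nbhs_isbox | exact: isbox_nbhs]. Qed.

Lemma nbhs_proj_pre' (p : prod_topology T) i (B : set (T i)) :
  nbhs (p i) B -> nbhs p [set q : prod_topology T | B (q i)].
Proof.
rewrite nbhsE => -[B' [oB' B'p] sB].
apply: (@filterS _ (nbhs p) _ [set q : prod_topology T | B' (q i)]).
  by move=> q /sB.
exact: nbhs_proj_pre.
Qed.
End Box2.

Lemma countableU2 (U : Type) (A B : set U) :
  countable A -> countable B -> countable (A `|` B).
Proof.
move=> cA cB.
have -> : A `|` B = \bigcup_(b in [set: bool]) (if b then A else B).
  apply/seteqP; split => x.
  - by case=> H; [exists true | exists false].
  - by case=> -[] _ H; [left|right].
by apply: bigcup_countable; [exact: countableP | case].
Qed.
Arguments countableU2 {U A B}.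

Lemma countable_img {U V : Type} (g : U -> V) (A : set U) :
  countable A -> countable (g @` A).
Proof. by move=> cA; apply: card_le_trans (card_image_le g A) cA. Qed.

Lemma closure_lemma (U : Type) (Phi : set U -> set U) (J0 : set U) :
  countable J0 -> (forall A, countable A -> countable (Phi A)) ->
  exists J, [/\ countable J, J0 `<=` J &
    forall K, finite_set K -> K `<=` J ->
      exists A, [/\ countable A, K `<=` A, A `<=` J & Phi A `<=` J]].
Proof.
move=> cJ0 cPhi.
pose fix Jn n := if n is m.+1 then Jn m `|` Phi (Jn m) else J0.
have cJn : forall n, countable (Jn n).
  elim=> [//|n IH] /=; apply: countableU2 => //; exact: cPhi.
have mono : forall n m, (n <= m)%N -> Jn n `<=` Jn m.
  move=> n m; elim: m => [|m IH]; first by rewrite leqn0 => /eqP ->.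
  rewrite leq_eqVlt => /orP [/eqP -> //|]; rewrite ltnS => /IH H i /H Hi /=; by left.
exists (\bigcup_n Jn n); split.
- by apply: bigcup_countable => // n _.
- by move=> i Hi; exists 0%N.
move=> K fK KJ.
have : \forall n \near \oo, forall i, K i -> Jn n i.
  apply: (@finite_bigI _ _ _ K (fun i n => Jn n i)) => // i /KJ [N _ HN].
  by exists N => // n /= Nn; exact: (mono N).
move=> [N _ HN]; exists (Jn N); split.
- exact: cJn.
- move=> i Ki; exact: (HN N (leqnn N)) i Ki.
- by move=> i Hi; exists N.
- by move=> i Hi; exists N.+1 => //=; right.
Qed.

From mathcomp Require Import ring lra.
Import Order.TTheory GRing.Theory Num.Theory.
Section Main.
Local Open Scope ring_scope.
Variables (R : realType) (I : Type) (X : I -> topologicalType) (Y : set (Prod X))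
  (f : set_type Y -> R).
Hypothesis fill : fills_countable_subproducts X Y.
Hypothesis fc : continuous f.
Hypothesis Yne : exists y0, Y y0.

Definition F (x : Prod X) : R :=
  if pselect (Y x) is left h then f (exist _ x (mem_set h)) else 0.

Lemma FE (y : set_type Y) : F (set_val y) = f y.
Proof.
rewrite /F; case: pselect => [h|]; last by move: (set_valP y).
by congr f; apply: val_inj.
Qed.

Lemma fillP (p : Prod X) (J : set I) : countable J ->
  exists y, Y y /\ forall i, J i -> y i = p i.
Proof.
move=> cJ; have [->|/set0P [j Jj]] := eqVneq J set0.
  by case: Yne => y0 Yy0; exists y0; split => // i.
have : (projJ X J @` Y) (projJ X J p) by rewrite fill //; exists j.
case=> y Yy E; exists y; split => // i Ji.
have := f_equal (fun g : subProd X J => g (exist _ i (mem_set Ji))) E.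
by [].
Qed.

Lemma locnbhs (y : Prod X) (e : R) : Y y -> 0 < e ->
  exists S1 O1, [/\ finite_set S1, (forall i, S1 i -> open (O1 i) /\ O1 i (y i)) &
    forall u, Y u -> box S1 O1 u -> `|F u - F y| < e].
Proof.
move=> Yy e0; pose yy : set_type Y := exist _ y (mem_set Yy).
have := fc yy; move/cvgrPdist_lt => /(_ e e0).
rewrite /nbhs /= => -[B [[W oW <-] Wy BA]].
have : nbhs y W by apply: open_nbhs_nbhs; split.
move/nbhs_isbox => [Sy [Oy [fS oS sS]]].
exists Sy, Oy; split => // u Yu bu.
have := BA (exist _ u (mem_set Yu)) (sS _ bu).
rewrite /= -(FE yy) -(FE (exist _ u (mem_set Yu))) /=.
by rewrite distrC.
Qed.

Definition ek (k : nat) : R := (k.+1%:R)^-1.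
Lemma ek_gt0 k : 0 < ek k.
Proof. by rewrite /ek invr_gt0 ltr0n. Qed.

Definition nbP (k : nat) (y : Prod X) (SO : (set I * (forall i, set (X i)))%type) :=
  Y y -> [/\ finite_set SO.1, (forall i, SO.1 i -> open (SO.2 i) /\ SO.2 i (y i)) &
    forall u, Y u -> box SO.1 SO.2 u -> `|F u - F y| < ek k].

Lemma nb_ex k y : exists SO, nbP k y SO.
Proof.
have [Yy|nY] := pselect (Y y); last by exists (set0, fun _ => setT).
have [Sy [Oy H]] := locnbhs y (ek k) Yy (ek_gt0 k).
by exists (Sy, Oy).
Qed.

Definition nb k y := projT1 (cid (nb_ex k y)).
Definition Sp k y := (nb k y).1.
Definition Op k y := (nb k y).2.
Lemma nbPP k y : nbP k y (nb k y).
Proof. exact: (projT2 (cid (nb_ex k y))). Qed.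

Lemma Sp_fin k y : Y y -> finite_set (Sp k y).
Proof. by move=> Yy; case: (nbPP k y Yy). Qed.
Lemma Sp_cnt k y : Y y -> countable (Sp k y).
Proof. by move=> Yy; apply: finite_set_countable; exact: (Sp_fin k y). Qed.
Lemma Op_open k y i : Y y -> Sp k y i -> open (Op k y i).
Proof. by move=> Yy Si; case: (nbPP k y Yy) => _ /(_ i Si) []. Qed.
Lemma Op_in k y i : Y y -> Sp k y i -> Op k y i (y i).
Proof. by move=> Yy Si; case: (nbPP k y Yy) => _ /(_ i Si) []. Qed.
Lemma Sp_osc k y u : Y y -> Y u -> box (Sp k y) (Op k y) u -> `|F u - F y| < ek k.
Proof. by move=> Yy; case: (nbPP k y Yy) => _ _; apply. Qed.

Lemma close2 k a b (p : Prod X) : Y a -> Y b ->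
  (forall i, Sp k a i -> Op k a i (p i)) -> (forall i, Sp k b i -> Op k b i (p i)) ->
  `|F a - F b| < ek k + ek k.
Proof.
move=> Ya Yb pa pb.
have [u [Yu Hu]] := fillP p _ (countableU2 (Sp_cnt k a Ya) (Sp_cnt k b Yb)).
have ua : `|F u - F a| < ek k.
  by apply: Sp_osc => // i Si; rewrite Hu; [exact: pa | left].
have ub : `|F u - F b| < ek k.
  by apply: Sp_osc => // i Si; rewrite Hu; [exact: pb | right].
have -> : F a - F b = (F u - F b) - (F u - F a) by ring.
by apply: le_lt_trans (ler_normB _ _) _; rewrite ltrD.
Qed.

Lemma ek_small (a : R) : (forall k, `|a| < 4%:R * ek k) -> a = 0.
Proof.
move=> H; apply/eqP; apply: contraT => a0.
have pa : 0 < `|a| by rewrite normr_gt0.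
have r0 : 0 <= 4%:R / `|a| by rewrite divr_ge0 // ltW.
have /andP [_ hr] := truncn_itv r0.
have := H (Num.truncn (4%:R / `|a|)); rewrite /ek.
set n := (Num.truncn (4%:R / `|a|)).+1%:R in hr *.
have n0 : 0 < n by rewrite /n ltr0n.
rewrite ltr_pdivrMr // in hr.
rewrite -[_ * n^-1]/(4%:R / n) ltr_pdivlMr // => h.
have : 4%:R < 4%:R :> R by apply: lt_trans hr _; rewrite mulrC.
by rewrite ltxx.
Qed.

Lemma pick_ex (J : set I) (x : Prod X) : exists y, countable J -> Y y /\ forall i, J i -> y i = x i.
Proof.
have [cJ|ncJ] := pselect (countable J); last by exists x.
by have [y Hy] := fillP x J cJ; exists y.
Qed.
Definition pick J x := projT1 (cid (pick_ex J x)).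
Lemma pickP J x : countable J -> Y (pick J x) /\ forall i, J i -> pick J x i = x i.
Proof. exact: (projT2 (cid (pick_ex J x))). Qed.

Lemma cont_crit (g : Prod X -> R) :
  (forall x e, 0 < e -> isbox x [set t | `|g x - g t| < e]) -> continuous g.
Proof.
move=> H x; apply/(@cvgrPdist_lt _ _ _ _ (@nbhs_filter (Prod X) x)) => e e0.
exact: (isbox_nbhs _ _ (H x e e0)).
Qed.

Lemma final_global (J : set I) : countable J ->
  (forall y y', Y y -> Y y' -> (forall i, J i -> y i = y' i) -> F y = F y') ->
  exists g : Prod X -> R, continuous g /\ forall y, g (set_val y) = f y.
Proof.
move=> cJ dep.
exists (fun x => F (pick J x)); split; last first.
  move=> y; rewrite -FE; apply: dep.
  - by case: (pickP J (set_val y) cJ).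
  - exact: set_valP.
  - by move=> i Ji; case: (pickP J (set_val y) cJ) => _ ->.
apply: cont_crit => x e e0.
have [Yp Hp] := pickP J x cJ.
have [Sx [Ox [fS oS sS]]] := locnbhs (pick J x) e Yp e0.
exists (Sx `&` J), Ox; split.
- exact: finite_setIl.
- move=> i [Si Ji]; rewrite -(Hp i Ji); exact: oS.
move=> x' Hx' /=.
pose p := fun i => if pselect (J i) then x' i else pick J x i.
have [u [Yu Hu]] := fillP p _ (countableU2 cJ (finite_set_countable fS)).
have [Yp' Hp'] := pickP J x' cJ.
have -> : F (pick J x') = F u.
  apply: dep => // i Ji; rewrite Hp' // Hu; last by left.
  by rewrite /p; case: pselect.
rewrite distrC; apply: sS => // i Si; rewrite Hu; last by right.
rewrite /p; case: pselect => Ji; first exact: Hx'.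
exact: (oS i Si).2.
Qed.

Lemma dep_of_eps :
  (forall k, exists J, countable J /\ forall y y', Y y -> Y y' ->
     (forall i, J i -> y i = y' i) -> `|F y - F y'| < 4%:R * ek k) ->
  exists J, countable J /\ forall y y', Y y -> Y y' ->
     (forall i, J i -> y i = y' i) -> F y = F y'.
Proof.
move=> H; have /choice [Jk HJ] := H.
exists (\bigcup_(k in [set: nat]) Jk k); split.
  by apply: bigcup_countable => [|k _]; [exact: countableP | case: (HJ k)].
move=> y y' Yy Yy' agr; apply/eqP; rewrite -subr_eq0; apply/eqP.
apply: ek_small => k; case: (HJ k) => _; apply => // i Ji; apply: agr.
by exists k.
Qed.

Definition Rq := {i : I & set (X i)}.
Definition rI (r : Rq) : I := projT1 r.
Definition boxR (Rs : set Rq) (p : Prod X) := forall r, Rs r -> projT2 r (p (projT1 r)).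

Definition y0 := projT1 (cid Yne).

Lemma boxR_nbhs (x : Prod X) (Rs : set Rq) : finite_set Rs ->
  (forall r, Rs r -> nbhs (x (projT1 r)) (projT2 r)) -> nbhs x (boxR Rs).
Proof.
move=> fR H.
apply: (@finite_bigI _ _ _ Rs (fun r (q : Prod X) => projT2 r (q (projT1 r)))) => // r Rr.
exact: nbhs_proj_pre' (H r Rr).
Qed.

Lemma ek_lt (e : R) : 0 < e -> exists k, ek k < e.
Proof.
move=> e0.
have r0 : 0 <= e^-1 by rewrite invr_ge0 ltW.
have /andP [_ hr] := truncn_itv r0.
exists (Num.truncn e^-1); rewrite /ek.
set n := (Num.truncn e^-1).+1%:R in hr *.
have n0 : 0 < n by rewrite /n ltr0n.
rewrite -[n^-1]mul1r ltr_pdivrMr // -ltr_pdivrMl // mulr1 //.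
Qed.

Definition testpt (Rs : set Rq) : Prod X :=
  if pselect (exists p, boxR Rs p) is left h then pick (rI @` Rs) (projT1 (cid h))
  else pick set0 y0.

Lemma testptY Rs : finite_set Rs -> Y (testpt Rs).
Proof.
move=> fR; rewrite /testpt; case: pselect => [h|_].
  by case: (pickP (rI @` Rs) (projT1 (cid h))) => //;
     apply: finite_set_countable; exact: finite_image.
by case: (pickP set0 y0) => //; exact: countable0.
Qed.

Lemma testpt_box Rs : finite_set Rs -> (exists p, boxR Rs p) -> boxR Rs (testpt Rs).
Proof.
move=> fR ex; rewrite /testpt; case: pselect => [h|//].
have cR : countable (rI @` Rs) by apply: finite_set_countable; exact: finite_image.
case: (pickP (rI @` Rs) (projT1 (cid h)) cR) => _ Hp r Rr.
rewrite Hp; last by exists r.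
exact: (projT2 (cid h)) r Rr.
Qed.

Lemma dep_sep (sep : forall i, separable (X i)) k :
  exists J, countable J /\ forall y y', Y y -> Y y' ->
     (forall i, J i -> y i = y' i) -> `|F y - F y'| < 4%:R * ek k.
Proof.
have Dex : forall i, exists D : set (X i), countable D /\ dense D.
  by move=> i; case: (sep i) => D cD dD; exists D.
pose D := fun i => projT1 (cid (Dex i)).
have cD : forall i, countable (D i) by move=> i; case: (projT2 (cid (Dex i))).
have dD : forall i, dense (D i) by move=> i; case: (projT2 (cid (Dex i))).
pose Req := fun A : set I => \bigcup_(i in A) ((fun d => (existT _ i [set d] : Rq)) @` D i).
have cReq : forall A, countable A -> countable (Req A).
  by move=> A cA; apply: bigcup_countable => // i _; apply: countable_img.
pose Phi := fun A : set I => A `|` \bigcup_(Rs in [set Rs | Rs `<=` Req A /\ finite_set Rs])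
   Sp k (testpt Rs).
have cPhi : forall A, countable A -> countable (Phi A).
  move=> A cA; apply: countableU2 => //; apply: bigcup_countable.
    by apply: countable_finite_subset; exact: cReq.
  by move=> Rs [_ fR]; apply: Sp_cnt; exact: testptY.
have [J [cJ _ clo]] := @closure_lemma _ Phi set0 (countable0 _) cPhi.
exists J; split => // y y' Yy Yy' agr.
pose K := (Sp k y `|` Sp k y') `&` J.
have fK : finite_set K by apply: finite_setIl; rewrite finite_setU; split; exact: Sp_fin.
have [A [cA KA AJ PhiJ]] := clo K fK (fun i Ki => Ki.2).
pose W := fun i => (if pselect (Sp k y i) then Op k y i else setT) `&`
                   (if pselect (Sp k y' i) then Op k y' i else setT).
have dex : forall i, exists di : X i, K i -> (W i `&` D i) di.
  move=> i; have [Ki|nK] := pselect (K i); last by exists (y i).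
  have oW : open (W i).
    by apply: openI; case: pselect => h /=; try exact: openT; exact: Op_open.
  have Wy : W i (y i).
    split; case: pselect => hh //=; first exact: Op_in.
    by rewrite agr; [exact: Op_in | exact: Ki.2].
  have [di Hdi] := dD i (W i) (ex_intro _ _ Wy) oW.
  by exists di.
pose d := fun i => projT1 (cid (dex i)).
have dP : forall i, K i -> (W i `&` D i) (d i) by move=> i; exact: (projT2 (cid (dex i))).
pose Rs := [set (existT _ i [set d i] : Rq) | i in K].
have fRs : finite_set Rs by exact: finite_image.
have RsReq : Rs `<=` Req A.
  move=> _ [i Ki <-]; exists i; first exact: KA.
  by exists (d i) => //; case: (dP i Ki).
pose e := testpt Rs.
have Ye : Y e by exact: (testptY Rs fRs).
have eK : forall i, K i -> e i = d i.
  have bd : boxR Rs d by move=> _ [j _ <-].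
  move=> i Ki; have := testpt_box Rs fRs (ex_intro _ d bd) (existT _ i [set d i]).
  by apply; exists i.
have SeJ : forall i, Sp k e i -> J i.
  move=> i Si; apply: PhiJ; right; exists Rs => //.
have cl : forall z, Y z -> Sp k z `<=` Sp k y `|` Sp k y' ->
    (forall i, K i -> Sp k z i -> Op k z i (d i)) -> `|F z - F e| < ek k + ek k.
  move=> z Yz sz hz.
  apply: (close2 k z e (fun i => if pselect (Sp k e i) then e i else z i) Yz Ye) => i Si;
    case: pselect => h /=.
  - have Ki : K i by split; [exact: sz | exact: SeJ].
    by rewrite eK //; exact: hz.
  - exact: (Op_in k z i Yz Si).
  - exact: (Op_in k e i Ye Si).
  - by [].
have c1 : `|F y - F e| < ek k + ek k.
  apply: cl => //.
  move=> i Ki h; have := dP i Ki; rewrite /W /= => -[[+ _] _].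
  by case: pselect.
have c2 : `|F y' - F e| < ek k + ek k.
  apply: cl => //.
  move=> i Ki h; have := dP i Ki; rewrite /W /= => -[[_ +] _].
  by case: pselect.
have -> : F y - F y' = (F y - F e) - (F y' - F e) by ring.
apply: le_lt_trans (ler_normB _ _) _.
have -> : 4%:R * ek k = (ek k + ek k) + (ek k + ek k) by ring.
by rewrite ltrD.
Qed.

Definition fibconst (J : set I) (x : Prod X) :=
  forall y y', Y y -> Y y' -> (forall i, J i -> y i = x i) -> (forall i, J i -> y' i = x i) ->
  F y = F y'.

Lemma fiber_ex x : exists J, countable J /\ fibconst J x.
Proof.
pose Phi := fun A : set I => A `|` \bigcup_(k in [set: nat]) Sp k (pick A x).
have cPhi : forall A, countable A -> countable (Phi A).
  move=> A cA; apply: countableU2 => //; apply: bigcup_countable; first exact: countableP.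
  by move=> k _; apply: Sp_cnt; case: (pickP A x cA).
have [J [cJ _ clo]] := @closure_lemma _ Phi set0 (countable0 _) cPhi.
exists J; split => // y y' Yy Yy' hy hy'.
apply/eqP; rewrite -subr_eq0; apply/eqP; apply: ek_small => k.
pose K := (Sp k y `|` Sp k y') `&` J.
have fK : finite_set K by apply: finite_setIl; rewrite finite_setU; split; exact: Sp_fin.
have [A [cA KA AJ PhiJ]] := clo K fK (fun i Ki => Ki.2).
have [Yp Hp] := pickP A x cA.
pose p := pick A x.
have SpJ : forall i, Sp k p i -> J i.
  by move=> i Si; apply: PhiJ; right; exists k.
have cl : forall z, Y z -> Sp k z `<=` Sp k y `|` Sp k y' -> (forall i, J i -> z i = x i) ->
    `|F z - F p| < ek k + ek k.
  move=> z Yz sz hz.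
  apply: (close2 k z p (fun i => if pselect (Sp k z i) then z i else p i) Yz Yp) => i Si;
    case: pselect => h /=.
  - exact: (Op_in k z i Yz Si).
  - by [].
  - have Ki : K i by split; [exact: sz | exact: SpJ].
    rewrite (hz i (SpJ i Si)) -(Hp i (KA i Ki)); exact: (Op_in k p i Yp Si).
  - exact: (Op_in k p i Yp Si).
have c1 := cl y Yy (fun i h => or_introl h) hy.
have c2 := cl y' Yy' (fun i h => or_intror h) hy'.
have -> : F y - F y' = (F y - F p) - (F y' - F p) by ring.
apply: le_lt_trans (ler_normB _ _) _.
have -> : 4%:R * ek k = (ek k + ek k) + (ek k + ek k) by ring.
by rewrite ltrD.
Qed.

Definition Jf x := projT1 (cid (fiber_ex x)).
Lemma Jf_cnt x : countable (Jf x).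
Proof. by case: (projT2 (cid (fiber_ex x))). Qed.
Lemma Jf_const x : fibconst (Jf x) x.
Proof. by case: (projT2 (cid (fiber_ex x))). Qed.
Definition gl x := F (pick (Jf x) x).
Lemma gl_eq x y : Y y -> (forall i, Jf x i -> y i = x i) -> gl x = F y.
Proof.
move=> Yy hy; have [Yp Hp] := pickP (Jf x) x (Jf_cnt x).
exact: (Jf_const x) Yp Yy Hp hy.
Qed.

Lemma final_fc (fcb : forall i, first_countable (X i)) :
  exists g : Prod X -> R, continuous g /\ forall y, g (set_val y) = f y.
Proof.
exists gl; split; last by move=> y; rewrite (gl_eq (set_val y) (set_val y) (set_valP y)) // FE.
apply: cont_crit => x e e0; apply: nbhs_isbox.
apply: contrapT => nB.
have [k hk] := ek_lt (e / 2%:R) (divr_gt0 e0 (ltr0n _ 2)).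
have Bex : forall i, exists Bi : set (set (X i)), [/\ countable Bi,
    (forall b, Bi b -> nbhs (x i) b) & (forall U, nbhs (x i) U -> exists2 b, Bi b & b `<=` U)].
  by move=> i; exact: (fcb i (x i)).
pose Bs := fun i => projT1 (cid (Bex i)).
have cBs : forall i, countable (Bs i) by move=> i; case: (projT2 (cid (Bex i))).
have nBs : forall i b, Bs i b -> nbhs (x i) b by move=> i; case: (projT2 (cid (Bex i))).
have bBs : forall i U, nbhs (x i) U -> exists2 b, Bs i b & b `<=` U.
  by move=> i; case: (projT2 (cid (Bex i))).
pose Req := fun A : set I => \bigcup_(i in A) ((fun b => (existT _ i b : Rq)) @` Bs i).
have cReq : forall A, countable A -> countable (Req A).
  by move=> A cA; apply: bigcup_countable => // i _; apply: countable_img.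
pose B := [set t | `|gl x - gl t| < e].
have badex : forall Rs, exists x', (finite_set Rs /\ forall r, Rs r -> nbhs (x (projT1 r)) (projT2 r)) ->
    boxR Rs x' /\ ~ B x'.
  move=> Rs; have [[fR nR]|nP] := pselect (finite_set Rs /\ forall r, Rs r -> nbhs (x (projT1 r)) (projT2 r));
    last by exists x.
  have nb := boxR_nbhs x Rs fR nR.
  have : ~ (boxR Rs `<=` B) by move=> sub; apply: nB; exact: filterS sub nb.
  move=> /existsNP [x' /not_implyP [bx nBx]]; by exists x'.
pose xb := fun Rs => projT1 (cid (badex Rs)).
pose eb := fun Rs => pick (Jf (xb Rs) `|` rI @` Rs) (xb Rs).
have cJR : forall Rs, finite_set Rs -> countable (Jf (xb Rs) `|` rI @` Rs).
  move=> Rs fR; apply: countableU2; first exact: Jf_cnt.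
  by apply: finite_set_countable; exact: finite_image.
pose Phi := fun A : set I => A `|` \bigcup_(Rs in [set Rs | Rs `<=` Req A /\ finite_set Rs])
   Sp k (eb Rs).
have cPhi : forall A, countable A -> countable (Phi A).
  move=> A cA; apply: countableU2 => //; apply: bigcup_countable.
    by apply: countable_finite_subset; exact: cReq.
  by move=> Rs [_ fR]; apply: Sp_cnt; case: (pickP _ (xb Rs) (cJR Rs fR)).
have [L [cL JL clo]] := @closure_lemma _ Phi (Jf x) (Jf_cnt x) cPhi.
have [Yz Hz] := pickP L x cL.
pose z := pick L x.
have gz : gl x = F z by apply: gl_eq => // i Ji; apply: Hz; exact: JL.
pose K := Sp k z `&` L.
have fK : finite_set K by apply: finite_setIl; exact: Sp_fin.
have [A [cA KA AL PhiL]] := clo K fK (fun i Ki => Ki.2).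
have bbex : forall i, exists b : set (X i), K i -> Bs i b /\ b `<=` Op k z i.
  move=> i; have [Ki|nK] := pselect (K i); last by exists setT.
  have : nbhs (x i) (Op k z i).
    apply: open_nbhs_nbhs; split; first exact: (Op_open k z i Yz Ki.1).
    rewrite -(Hz i Ki.2); exact: (Op_in k z i Yz Ki.1).
  by move=> /bBs [b Bb sb]; exists b.
pose bb := fun i => projT1 (cid (bbex i)).
have bbP : forall i, K i -> Bs i (bb i) /\ bb i `<=` Op k z i.
  by move=> i; exact: (projT2 (cid (bbex i))).
pose Rs := [set (existT _ i (bb i) : Rq) | i in K].
have fRs : finite_set Rs by exact: finite_image.
have RsReq : Rs `<=` Req A.
  by move=> _ [i Ki <-]; exists i; [exact: KA | exists (bb i) => //; case: (bbP i Ki)].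
have nRs : forall r, Rs r -> nbhs (x (projT1 r)) (projT2 r).
  by move=> _ [i Ki <-]; apply: nBs; case: (bbP i Ki).
have [bx nBx] := projT2 (cid (badex Rs)) (conj fRs nRs).
pose x' := xb Rs.
pose e' := eb Rs.
have [Ye He] := pickP _ x' (cJR Rs fRs).
have gx' : gl x' = F e' by apply: gl_eq => // i Ji; apply: He; left.
have SeL : forall i, Sp k e' i -> L i.
  by move=> i Si; apply: PhiL; right; exists Rs.
have c : `|F z - F e'| < ek k + ek k.
  apply: (close2 k z e' (fun i => if pselect (Sp k e' i) then e' i else z i) Yz Ye) => i Si;
    case: pselect => h /=.
  - have Ki : K i by split => //; exact: SeL.
    rewrite /e' /eb -/x' He; last by right; exists (existT _ i (bb i)) => //; exists i.
    apply: (bbP i Ki).2; exact: (bx (existT _ i (bb i)) (ex_intro2 _ _ i Ki erefl)).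
  - exact: (Op_in k z i Yz Si).
  - exact: (Op_in k e' i Ye Si).
  - by [].
apply: nBx; suff hh : `|F z - F e'| < e by move: hh; rewrite -gz -gx'.
apply: lt_le_trans c _.
have : ek k + ek k <= e / 2%:R + e / 2%:R by rewrite lerD // ltW.
by move=> /le_trans; apply; rewrite -splitr.
Qed.

Definition extK (K : set I) (w : subProd X K) (d : Prod X) : Prod X :=
  fun i => if pselect (K i) is left h then w (exist _ i (mem_set h)) else d i.

Lemma extK_in K w d (j : set_type K) : extK K w d (set_val j) = w j.
Proof.
case: j => i hi; rewrite /extK /=; case: pselect => h; last by exfalso; apply: h; exact: set_mem hi.
by rewrite (bool_irrelevance (mem_set h) hi).
Qed.

Lemma extK_out K w d i : ~ K i -> extK K w d i = d i.
Proof. by rewrite /extK; case: pselect. Qed.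

Lemma subbox_open (K : set I) (S0 : set I) (O0 : forall i, set (X i)) :
  finite_set S0 -> (forall i, S0 i -> open (O0 i)) ->
  open [set w : subProd X K | forall j : set_type K, S0 (set_val j) -> O0 (set_val j) (w j)].
Proof.
move=> fS oS; rewrite openE => w Ww; rewrite /interior.
apply: isbox_nbhs; exists [set j : set_type K | S0 (set_val j)], (fun j => O0 (set_val j)).
split.
- apply: (@finite_preimage _ _ S0 (@set_val _ K)) => //.
  by move=> a b _ _; apply: val_inj.
- by move=> j Sj; split; [exact: oS | exact: Ww].
- by move=> q Hq.
Qed.

Lemma extK_in' K w d i (h : K i) : extK K w d i = w (exist _ i (mem_set h)).
Proof.
rewrite /extK; case: pselect => h'; last by [].
by rewrite (Prop_irrelevance h' h).
Qed.

Lemma finite_subsingleton {U : Type} (A : set U) :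
  (forall a b, A a -> A b -> a = b) -> finite_set A.
Proof.
move=> H; have [->|/set0P [a Aa]] := eqVneq A set0; first exact: finite_set0.
have -> : A = [set a]; last exact: finite_set1.
by apply/seteqP; split => b; [move=> Ab; exact: H | move=> ->].
Qed.

Definition TP k (P : (Prod X * Prod X)%type) := Sp k P.1 `|` Sp k P.2.
Definition Ow k (P : (Prod X * Prod X)%type) i : set (X i) :=
  (if pselect (Sp k P.1 i) then Op k P.1 i else setT) `&`
  (if pselect (Sp k P.2 i) then Op k P.2 i else setT).
Definition badP k (K : set I) (P : (Prod X * Prod X)%type) :=
  [/\ Y P.1, Y P.2, (forall i, K i -> P.1 i = P.2 i) & 4%:R * ek k <= `|F P.1 - F P.2|].
Definition goodF k K (Pf : set (Prod X * Prod X)) :=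
  (forall P, Pf P -> badP k K P) /\
  (forall P Q, Pf P -> Pf Q -> P <> Q -> forall i, TP k P i -> TP k Q i -> K i).

Lemma lemA (pa : forall J, countable J -> pseudo_aleph1_compact (subProd X J)) k K Pf :
  finite_set K -> goodF k K Pf -> countable Pf.
Proof.
move=> fK [gb gd]; apply: contrapT => nc.
have cK : countable K by exact: finite_set_countable.
pose WP := fun P : (Prod X * Prod X)%type =>
  [set w : subProd X K | forall j : set_type K, TP k P (set_val j) -> Ow k P (set_val j) (w j)].
have oW : forall P, Pf P -> open (WP P).
  move=> P PP; case: (gb P PP) => Y1 Y2 _ _.
  apply: subbox_open; first by rewrite finite_setU; split; exact: Sp_fin.
  by move=> i _; apply: openI; case: pselect => h /=; try exact: openT; exact: Op_open.
have inW : forall P, Pf P -> WP P (projJ X K P.1).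
  move=> P PP j _; case: (gb P PP) => Y1 Y2 agr _; rewrite /projJ.
  split; case: pselect => h //=; first exact: Op_in.
  rewrite agr; [exact: Op_in | exact: set_valP].
pose Fm := WP @` Pf.
have oFm : forall A, Fm A -> open A by move=> _ [P PP <-]; exact: oW.
have key : exists x : subProd X K, forall U, nbhs x U ->
    infinite_set [set P | Pf P /\ (WP P `&` U) !=set0].
  have [LF|nLF] := pselect (locally_finite_family Fm).
  - have cF := pa K cK Fm oFm LF.
    have : exists A, Fm A /\ ~ finite_set [set P | Pf P /\ WP P = A].
      apply: contrapT => H; apply: nc.
      have -> : Pf = \bigcup_(A in Fm) [set P | Pf P /\ WP P = A].
        apply/seteqP; split => [P PP|P [A _ []] //].
        by exists (WP P) => //; exists P.
      apply: bigcup_countable => // A FA; apply: finite_set_countable.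
      by apply: contrapT => nf; apply: H; exists A.
    move=> [_ [[P0 PP0 <-] nf]].
    exists (projJ X K P0.1) => U nU.
    apply: sub_infinite_set nf => P [PP WE]; split => //.
    exists (projJ X K P0.1); split; first by rewrite WE; exact: inW.
    exact: nbhs_singleton.
  - move: nLF => /existsNP [x Hx]; exists x => U nU nfin; apply: Hx.
    exists U; split => //.
    apply: sub_finite_set (finite_image WP nfin).
    by move=> A [[P PP <-] ne]; exists P.
case: key => x Hx.
have [Yz Hz] := pickP K (extK K x y0) cK.
pose z := pick K (extK K x y0).
pose Nz := [set w : subProd X K | forall j : set_type K, Sp k z (set_val j) ->
   Op k z (set_val j) (w j)].
have nNz : nbhs x Nz.
  apply: open_nbhs_nbhs; split.
    apply: subbox_open; [exact: Sp_fin | by move=> i Si; exact: Op_open].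
  move=> j Sj; rewrite -(extK_in K x y0 j) -(Hz _ (set_valP j)).
  exact: Op_in.
have infG := Hx Nz nNz.
pose Bd := \bigcup_(i in Sp k z `\` K) [set P | Pf P /\ TP k P i].
have fBd : finite_set Bd.
  apply: bigcup_finite; first by apply: finite_setD; exact: Sp_fin.
  move=> i [_ nKi]; apply: finite_subsingleton => P Q [PP TPi] [PQ TQi].
  by apply: contrapT => nPQ; apply: nKi; exact: (gd P Q PP PQ nPQ i TPi TQi).
have /infinite_setN0 [P [[PP [w [Ww Nw]]] nBd]] := infinite_setD infG fBd.
case: (gb P PP) => Y1 Y2 _ bad.
have cl : forall c, Y c -> (forall i, Sp k c i -> TP k P i) ->
    (forall i v, Sp k c i -> Ow k P i v -> Op k c i v) -> `|F c - F z| < ek k + ek k.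
  move=> c Yc sc oc.
  apply: (close2 k c z (extK K w (fun i => if pselect (Sp k c i) then c i else z i)) Yc Yz)
    => i Si.
  - have [Ki|nKi] := pselect (K i).
      rewrite (extK_in' K w _ i Ki); apply: oc => //.
      exact: (Ww (exist _ i (mem_set Ki)) (sc i Si)).
    by rewrite extK_out //; case: pselect => h //=; exact: Op_in.
  - have [Ki|nKi] := pselect (K i).
      rewrite (extK_in' K w _ i Ki).
      exact: (Nw (exist _ i (mem_set Ki)) Si).
    rewrite extK_out //; case: pselect => h /=; last exact: Op_in.
    by exfalso; apply: nBd; exists i => //; split => //; exact: sc.
have c1 : `|F P.1 - F z| < ek k + ek k.
  apply: cl => //; first by move=> i h; left.
  by move=> i v h; case; case: pselect.
have c2 : `|F P.2 - F z| < ek k + ek k.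
  apply: cl => //; first by move=> i h; right.
  by move=> i v h; case=> _; case: pselect.
move: bad; apply/negP; rewrite -ltNge.
have -> : F P.1 - F P.2 = (F P.1 - F z) - (F P.2 - F z) by ring.
apply: le_lt_trans (ler_normB _ _) _.
have -> : 4%:R * ek k = (ek k + ek k) + (ek k + ek k) by ring.
by rewrite ltrD.
Qed.

Lemma maxgood k K : exists M, goodF k K M /\ forall N, M `<` N -> ~ goodF k K N.
Proof.
apply: Zorn_bigcup => Fs sub tot; split.
  by move=> P [A FA AP]; case: (sub A FA) => gb _; exact: gb.
move=> P Q [A FA AP] [B FB BQ] nPQ.
have [AB|BA] := tot A B FA FB.
- by case: (sub B FB) => _ gd; apply: gd => //; exact: AB.
- by case: (sub A FA) => _ gd; apply: gd => //; exact: BA.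
Qed.

Lemma dep_pa (pa : forall J, countable J -> pseudo_aleph1_compact (subProd X J)) k :
  exists J, countable J /\ forall y y', Y y -> Y y' ->
     (forall i, J i -> y i = y' i) -> `|F y - F y'| < 4%:R * ek k.
Proof.
pose M := fun K => projT1 (cid (maxgood k K)).
have gM : forall K, goodF k K (M K) by move=> K; case: (projT2 (cid (maxgood k K))).
have mM : forall K N, M K `<` N -> ~ goodF k K N.
  by move=> K; case: (projT2 (cid (maxgood k K))).
pose Phi := fun A : set I => A `|` \bigcup_(K in [set K | K `<=` A /\ finite_set K])
   \bigcup_(P in M K) TP k P.
have cPhi : forall A, countable A -> countable (Phi A).
  move=> A cA; apply: countableU2 => //; apply: bigcup_countable.
    exact: countable_finite_subset.
  move=> K [_ fK]; apply: bigcup_countable; first exact: (lemA pa k K (M K) fK (gM K)).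
  move=> P MP; case: (gM K) => /(_ P MP) [Y1 Y2 _ _] _.
  by apply: countableU2; exact: Sp_cnt.
have [J [cJ _ clo]] := @closure_lemma _ Phi set0 (countable0 _) cPhi.
exists J; split => // y y' Yy Yy' agr.
rewrite ltNge; apply/negP => bad.
pose P := (y, y').
pose K := TP k P `&` J.
have fK : finite_set K.
  by apply: finite_setIl; rewrite finite_setU; split; exact: Sp_fin.
have [A [cA KA AJ PhiJ]] := clo K fK (fun i Ki => Ki.2).
have bP : badP k K P by split => // i Ki; apply: agr; exact: Ki.2.
have TQJ : forall Q, M K Q -> forall i, TP k Q i -> J i.
  move=> Q MQ i Ti; apply: PhiJ; right; exists K; first by split.
  by exists Q.
have [MP|nMP] := pselect (M K P).
  have : `|F y - F y'| < ek k + ek k.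
    apply: (close2 k y y' y Yy Yy') => i Si; first exact: Op_in.
    rewrite agr; first exact: Op_in.
    by apply: (TQJ P MP); right.
  move=> h; move: bad; apply/negP; rewrite -ltNge; apply: lt_le_trans h _.
  by rewrite -subr_ge0; have := ek_gt0 k; lra.
apply: (mM K (M K `|` [set P])).
  split; first by move=> Q MQ; left.
  by move=> H; apply: nMP; exact: (H P (or_intror erefl)).
case: (gM K) => gb gd; split.
  by move=> Q [/gb //|->].
move=> Q1 Q2 [M1|->] [M2|->] nQ i T1 T2.
- exact: (gd Q1 Q2 M1 M2 nQ i T1 T2).
- by split => //; exact: (TQJ Q1 M1 i T1).
- by split => //; exact: (TQJ Q2 M2 i T2).
- by [].
Qed.

Lemma final_all :
  (  (forall J : set I, countable J -> pseudo_aleph1_compact (subProd X J))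
  \/ (forall i : I, first_countable (X i))
  \/ (forall i : I, separable (X i))) ->
  exists g : Prod X -> R, continuous g /\ forall y, g (set_val y) = f y.
Proof.
case=> [pa|[fcb|sep]].
- have [J [cJ dep]] := dep_of_eps (dep_pa pa); exact: final_global cJ dep.
- exact: final_fc fcb.
- have [J [cJ dep]] := dep_of_eps (dep_sep sep); exact: final_global cJ dep.
Qed.
End Main.

Theorem proposition3p5 (R : realType) (I : Type) (X : I -> topologicalType)
  (Y : set (Prod X)) :
  fills_countable_subproducts X Y ->
  (  (forall J : set I, countable J -> pseudo_aleph1_compact (subProd X J))
  \/ (forall i : I, first_countable (X i))
  \/ (forall i : I, separable (X i))) ->
  C_embedded R Y.
Proof.
move=> fill H f fc.
have [Yne|nY] := pselect (exists y0, Y y0).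
  exact: (@final_all R I X Y f fill fc Yne H).
exists (fun _ => 0%R); split; first exact: cst_continuous.
by move=> y; exfalso; apply: nY; exists (set_val y); exact: set_valP.
Qed.
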